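(* For all constants $c_1,c_2$ with $0<c_1\le c_2<1$, for all sufficiently large $n$ with $t\le c_2 n$, and for all $k$ with $c_1 n\le k\le c_2 n$, the probability that the reverse reachable set of $B$ has exactly $k$ vertices is at most $\frac{1}{n^2}$.
   Context: Random graph model: $V$ is a set of $n$ vertices, $B\subseteq V$ a target set with $|B|=t$, each $v\in V$ has a prescribed out-degree $d_v$ with $2\le d_{\min}\le d_v\le d_{\max}$ (constants independent of $n$), and for each $v$ independently its out-neighbour set is chosen uniformly at random among all $d_v$-element subsets of $V$. The reverse reachable set of $B$ is the set of vertices having a directed path to a vertex of $B$. *)

(* Defs.v *)
From HB Require Import structures.
From mathcomp Require Import all_boot all_order all_algebra.
From mathcomp Require Import reals.
Set Implicit Arguments. Unset Strict Implicit. Unset Printing Implicit Defensive.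
Import Order.TTheory GRing.Theory Num.Theory.

(* An outcome of the random graph on vertex set V = 'I_n is an out-neighbour
   function f : V -> {set V}. *)

(* The random graph is the uniform distribution on this set (equivalently,
   each out-neighbour set is chosen independently and uniformly among the
   d v-element subsets of V). *)
Definition configs (n : nat) (d : 'I_n -> nat) : {set {ffun 'I_n -> {set 'I_n}}} :=
  [set f : {ffun 'I_n -> {set 'I_n}} | [forall v, #|f v| == d v]].

Definition edge_rel (n : nat) (f : {ffun 'I_n -> {set 'I_n}}) : rel 'I_n :=
  fun u w => w \in f u.

Definition rev_reach (n : nat) (f : {ffun 'I_n -> {set 'I_n}}) (B : {set 'I_n})
  : {set 'I_n} :=
  [set x | [exists b in B, connect (edge_rel f) x b]].

Definition prob_rr_size (R : realType) (n : nat) (d : 'I_n -> nat)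
  (B : {set 'I_n}) (k : nat) : R :=
  ((#|[set f in configs d | #|rev_reach f B| == k]|)%:R
    / (#|configs d|)%:R)%R.

(* Main.v *)
Require Import Defs.
From HB Require Import structures.
From mathcomp Require Import all_boot all_order all_algebra.
From mathcomp Require Import reals.
Import Order.TTheory GRing.Theory Num.Theory.
Local Open Scope ring_scope.
From mathcomp Require Import sequences exp.
From mathcomp Require Import ring lra zify.
Set Implicit Arguments. Unset Strict Implicit. Unset Printing Implicit Defensive.
Local Close Scope ring_scope.

Definition Aset n (d : 'I_n -> nat) (B T : {set 'I_n}) (v : 'I_n) : {set {set 'I_n}} :=
  [set X : {set 'I_n} | (#|X| == d v) && ((v \notin B) ==> ((v \in T) == (X \subset T)))].
Definition ET n (d : 'I_n -> nat) (B T : {set 'I_n}) : {set {ffun 'I_n -> {set 'I_n}}} :=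
  [set f : {ffun 'I_n -> {set 'I_n}} | [forall v, f v \in Aset d B T v]].

Lemma card_fam n (F : 'I_n -> {set {set 'I_n}}) :
  #|[set f : {ffun 'I_n -> {set 'I_n}} | [forall v, f v \in F v]]| = (\prod_v #|F v|)%N.
Proof.
have -> : #|[set f : {ffun 'I_n -> {set 'I_n}} | [forall v, f v \in F v]]| = #|family F|.
  apply: eq_card => f; rewrite inE; apply/forallP/familyP => H v; exact: H.
rewrite card_family foldrE big_map big_enum //.
Qed.

Lemma card_configs n (d : 'I_n -> nat) : #|configs d| = (\prod_v 'C(n, d v))%N.
Proof.
rewrite /configs.
have -> : [set f : {ffun 'I_n -> {set 'I_n}} | [forall v, #|f v| == d v]] =
   [set f : {ffun 'I_n -> {set 'I_n}} | [forall v, f v \in [set X : {set 'I_n} | #|X| == d v]]].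
  by apply/setP => f; rewrite !inE; apply: eq_forallb => v; rewrite inE.
rewrite card_fam; apply: eq_bigr => v _; by rewrite card_draws card_ord.
Qed.
Lemma rr_struct n (f : {ffun 'I_n -> {set 'I_n}}) (B : {set 'I_n}) v :
  v \notin B -> (v \in ~: rev_reach f B) = (f v \subset ~: rev_reach f B).
Proof.
move=> vB; rewrite inE.
apply/idP/idP.
- move=> nv; apply/subsetP => w wf; rewrite inE; apply: contra nv.
  rewrite !inE => /existsP[b /andP[bB cb]]; apply/existsP; exists b.
  rewrite bB /=; apply: connect_trans cb; apply: connect1; exact: wf.
- move=> /subsetP sub; apply/negP; rewrite inE => /existsP[b /andP[bB /connectP[p pth lst]]].
  case: p pth lst => [|w p] /=.
    by move=> _ eb; move: vB; rewrite -eb bB.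
  move=> /andP[ew pw] lst.
  have := sub w ew; rewrite !inE => /negP; apply; apply/existsP; exists b.
  rewrite bB /=; apply/connectP; exists p => //.
Qed.

Lemma rr_B n (f : {ffun 'I_n -> {set 'I_n}}) (B : {set 'I_n}) :
  ~: rev_reach f B \subset ~: B.
Proof.
rewrite setCS; apply/subsetP => b bB; rewrite inE; apply/existsP; exists b.
by rewrite bB connect0.
Qed.

Lemma union_bound n (d : 'I_n -> nat) (B : {set 'I_n}) k :
  (#|[set f in configs d | #|rev_reach f B| == k]| <=
  \sum_(T : {set 'I_n} | (T \subset ~: B) && (#|T| == n - k)) #|ET d B T|)%N.
Proof.
rewrite -sum1_card.
apply: (@leq_trans (\sum_(f in [set f in configs d | #|rev_reach f B| == k])
    \sum_(T : {set 'I_n} | (T \subset ~: B) && (#|T| == n - k)) (f \in ET d B T))%N).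
  apply: leq_sum => f; rewrite !inE => /andP[cf /eqP ck].
  rewrite (bigD1 (~: rev_reach f B)) /=; last first.
    by rewrite rr_B cardsCs setCK card_ord ck eqxx.
  suff -> : f \in ET d B (~: rev_reach f B) by [].
  rewrite inE; apply/forallP => v; rewrite inE.
  move: cf; rewrite inE => /forallP/(_ v) -> /=.
  apply/implyP => vB; apply/eqP; by rewrite -(rr_struct f vB) !inE.
rewrite (@exchange_big _ _ _ _ _ _ _ (fun f => f \in [set f0 in configs d | #|rev_reach f0 B| == k])) /=; apply: leq_sum => T _.
rewrite -sum1_card [X in (_ <= X)%N]big_mkcond /=.
rewrite big_mkcond /=; apply: leq_sum => f _; case: ifP => _ //; by case: (f \in ET d B T).
Qed.

Lemma card_Aset_B n (d : 'I_n -> nat) (B T : {set 'I_n}) v :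
  v \in B -> #|Aset d B T v| = 'C(n, d v).
Proof.
move=> vB; have := card_draws 'I_n (d v); rewrite card_ord => <-.
apply: eq_card => X; rewrite !inE vB /= andbT. done.
Qed.

Lemma card_Aset_T n (d : 'I_n -> nat) (B T : {set 'I_n}) v :
  v \notin B -> v \in T -> #|Aset d B T v| = 'C(#|T|, d v).
Proof.
move=> vB vT; rewrite -cards_draws; apply: eq_card => X; rewrite !inE vB vT /=.
by rewrite [true == _]eq_sym eqb_id andbC.
Qed.

Lemma card_Aset_N n (d : 'I_n -> nat) (B T : {set 'I_n}) v :
  v \notin B -> v \notin T -> (#|Aset d B T v| + 'C(#|T|, d v) = 'C(n, d v))%N.
Proof.
move=> vB vT; have := card_draws 'I_n (d v); rewrite card_ord => <-.
rewrite -cards_draws addnC.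
rewrite -(cardsID [set X : {set 'I_n} | X \subset T] [set A : {set 'I_n} | #|A| == d v]).
congr (_ + _)%N; apply: eq_card => X; rewrite !inE.
  by rewrite andbC.
by rewrite vB (negbTE vT) /= eq_sym andbC.
Qed.

Lemma bin_ratio m n d : (2 <= d)%N -> (m <= n)%N ->
  ('C(m, d) * n ^ 2 <= 'C(n, d) * m ^ 2)%N.
Proof.
case: d => [|[|e]] // _ mn.
have key : forall p, ('C(p, e.+2) * (e.+2 * e.+1) = p * p.-1 * 'C(p.-2, e))%N.
  move=> p.
  have h1 := mul_bin_diag p e.+1.
  have h2 := mul_bin_diag p.-1 e.
  rewrite mulnA (mulnC _ e.+2) -h1 -mulnA (mulnC _ e.+1) -h2.
  by case: p {h1 h2} => [|[|p]] /=; rewrite mulnA.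
suff G : ('C(m, e.+2) * n ^ 2 * (e.+2 * e.+1) <= 'C(n, e.+2) * m ^ 2 * (e.+2 * e.+1))%N.
  by rewrite leq_pmul2r in G.
rewrite mulnAC key [X in (_ <= X)%N]mulnAC key.
have hb : ('C(m.-2, e) <= 'C(n.-2, e))%N by apply: leq_bin2l; lia.
have hm : (m.-1 * n <= n.-1 * m)%N by nia.
have : (m * n * (m.-1 * n) * 'C(m.-2, e) <= m * n * (n.-1 * m) * 'C(n.-2, e))%N.
  by apply: leq_mul => //; apply: leq_mul.
congr (_ <= _)%N; nia.
Qed.

Local Open Scope ring_scope.

Lemma ratio_v (R : realType) n (d : 'I_n -> nat) (B T : {set 'I_n}) v :
  (0 < 'C(n, d v))%N -> T \subset ~: B ->
  (#|Aset d B T v|)%:R / ('C(n, d v))%:R =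
  (if v \in T then (if v \in B then 0 else ('C(#|T|, d v))%:R / ('C(n, d v))%:R)
   else (if v \in B then 1 else 1 - ('C(#|T|, d v))%:R / ('C(n, d v))%:R) :> R).
Proof.
move=> Cp TB.
have CR : ('C(n, d v))%:R != 0 :> R by rewrite pnatr_eq0 -lt0n.
case vB: (v \in B).
  have vT : v \notin T.
    by apply: contraTN vB => vT; have := subsetP TB v vT; rewrite inE => ->.
  by rewrite (negbTE vT) card_Aset_B // divff.
case vT: (v \in T).
  by rewrite card_Aset_T ?vB.
have := card_Aset_N d (negbT vB) (negbT vT).
move=> /(congr1 (fun x => x%:R : R)); rewrite natrD => H.
rewrite -H in CR *; by field.
Qed.

Lemma main_bound (R : realType) n (d : 'I_n -> nat) (B : {set 'I_n}) k :
  (k < n)%N -> (forall v, 2 <= d v <= n)%N ->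
  prob_rr_size R d B k <=
  ((n - k)%:R / n%:R) ^+ (n - k) * (1 + (n - k)%:R / n%:R - ((n - k)%:R / n%:R) ^+ 2) ^+ n.
Proof.
move=> kn hd.
set m := (n - k)%N.
have m0 : (0 < m)%N by rewrite subn_gt0.
have n0 : (0 < n)%N by apply: leq_ltn_trans kn.
have mn : (m <= n)%N by apply: leq_subr.
set y : R := m%:R / n%:R.
set z : R := n%:R / m%:R.
have nR : 0 < n%:R :> R by rewrite ltr0n.
have mR : 0 < m%:R :> R by rewrite ltr0n.
have zy : z * y = 1 by rewrite /z /y; field; rewrite ?gt_eqF.
have y0 : 0 < y by rewrite divr_gt0.
have y1 : y <= 1 by rewrite ler_pdivrMr // mul1r ler_nat.
have z1 : 1 <= z by rewrite ler_pdivlMr // mul1r ler_nat.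
have Cp : forall v, (0 < 'C(n, d v))%N by move=> v; rewrite bin_gt0; case/andP: (hd v).
pose rho v : R := ('C(m, d v))%:R / ('C(n, d v))%:R.
pose cT v : R := if v \in B then 0 else rho v.
pose cF v : R := if v \in B then 1 else 1 - rho v.
have rho0 : forall v, 0 <= rho v by move=> v; rewrite /rho divr_ge0.
have rho1 : forall v, rho v <= y ^+ 2.
  move=> v; rewrite /rho /y expr_div_n ler_pdivrMr ?ltr0n ?Cp //.
  rewrite mulrAC ler_pdivlMr ?exprn_gt0 // -!natrX -!natrM ler_nat.
  rewrite [X in (_ <= X)%N]mulnC; apply: bin_ratio => //.
  by case/andP: (hd v).
pose P (T : {set 'I_n}) := (T \subset ~: B) && (#|T| == m).
have Cpos : (0 < #|configs d|)%N.
  by rewrite card_configs prodn_gt0 // => v; apply: Cp.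
have CR : 0 < (#|configs d|)%:R :> R by rewrite ltr0n.
have step1 : prob_rr_size R d B k <= \sum_(T | P T) (#|ET d B T|)%:R / (#|configs d|)%:R.
  rewrite /prob_rr_size -mulr_suml -natr_sum.
  by rewrite ler_wpM2r ?invr_ge0 ?(ltW CR) // ler_nat union_bound.
apply: (le_trans step1).
have step2 : forall T, P T -> (#|ET d B T|)%:R / (#|configs d|)%:R =
    \prod_v (if v \in T then cT v else cF v).
  move=> T /andP[TB /eqP Tm].
  rewrite /ET card_fam card_configs !natr_prod -prodf_div.
  apply: eq_bigr => v _; rewrite ratio_v ?Cp // Tm.
  by rewrite /cT /cF /rho; case: (v \in T).
rewrite (eq_bigr _ step2).
pose w (T : {set 'I_n}) v := if v \in T then z * cT v else cF v.
have step3 : forall T, P T -> \prod_v (if v \in T then cT v else cF v) = y ^+ m * \prod_v w T v.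
  move=> T /andP[_ /eqP Tm].
  have -> : \prod_v w T v = \prod_v ((if v \in T then z else 1) * (if v \in T then cT v else cF v)).
    by apply: eq_bigr => v _; rewrite /w; case: (v \in T); rewrite ?mul1r.
  by rewrite big_split /= -big_mkcond /= prodr_const Tm mulrA -exprMn (mulrC y z) zy expr1n mul1r.
rewrite (eq_bigr _ step3) -mulr_sumr.
have wge0 : forall T v, 0 <= w T v.
  move=> T v; rewrite /w /cT /cF; case: (v \in T); case: (v \in B) => //.
  all: try by rewrite mulr_ge0 // (le_trans ler01 z1).
  all: try by rewrite subr_ge0 (le_trans (rho1 v)) // expr_le1 // ltW.
  all: try by rewrite mulr0.
apply: (@le_trans _ _ (y ^+ m * \sum_T \prod_v w T v)).
  rewrite ler_wpM2l ?exprn_ge0 ?(ltW y0) // [X in _ <= X](bigID P) /= lerDl.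
  by apply: sumr_ge0 => T _; apply: prodr_ge0 => v _.
rewrite ler_wpM2l ?exprn_ge0 ?(ltW y0) //.
have -> : \sum_T \prod_v w T v = \prod_v (z * cT v + cF v).
  by rewrite bigA_distr.
rewrite -[n in _ ^+ n]card_ord -prodr_const.
apply: ler_prod => v _; rewrite /cT /cF; case: (v \in B).
  by rewrite mulr0 add0r ler01 /=; nra.
apply/andP; split.
  have := rho0 v; nra.
have : (z - 1) * rho v <= (z - 1) * y ^+ 2 by rewrite ler_wpM2l // subr_ge0.
have : z * y ^+ 2 = y by rewrite expr2 mulrA zy mul1r.
move=> h1 h2; rewrite !mulrBl !mul1r h1 in h2; lra.
Qed.

Lemma anal (R : realType) (n m : nat) (y : R) :
  (0 < n)%N -> y = m%:R / n%:R -> 0 < y -> y <= 1 ->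
  y ^+ m * (1 + y - y ^+ 2) ^+ n <=
  expR (- (n%:R * (y * (1 - Num.sqrt y) ^+ 2))).
Proof.
move=> n0 ey y0 y1.
have nR : 0 < n%:R :> R by rewrite ltr0n.
have em : m%:R = y * n%:R by rewrite ey mulfVK // gt_eqF.
set s := Num.sqrt y.
have s0 : 0 <= s by apply: sqrtr_ge0.
have ys : y = s ^+ 2 by rewrite sqr_sqrtr // ltW.
have h1 : (1 + y - y ^+ 2) ^+ n <= expR (n%:R * (y - y ^+ 2)).
  rewrite expRM_natl; apply: lerXn2r.
  - rewrite nnegrE; nra.
  - by rewrite nnegrE expR_ge0.
  by rewrite -addrA expR_ge1Dx.
have h2 : y ^+ m <= expR ((2 * m)%:R * (s - 1)).
  rewrite expRM_natl ys -exprM; apply: lerXn2r.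
  - by rewrite nnegrE.
  - by rewrite nnegrE expR_ge0.
  by have := expR_ge1Dx (s - 1); rewrite addrC subrK.
apply: le_trans (ler_pM _ _ h2 h1) _.
- by apply: exprn_ge0; rewrite ltW.
- rewrite exprn_ge0 //; nra.
rewrite -expRD ler_expR natrM em ys; nra.
Qed.

Lemma exp_tail (R : realType) (n : nat) (del : R) :
  0 < del -> 6 <= n%:R * del ^+ 3 -> (0 < n)%N -> expR (- (n%:R * del)) <= 1 / (n%:R ^+ 2).
Proof.
move=> d0 h n0.
have nR : 0 < n%:R :> R by rewrite ltr0n.
rewrite expRN mul1r lef_pV2 ?posrE ?expR_gt0 ?exprn_gt0 //.
have := expR_ge1Dxn 2 (mulr_ge0 (ltW nR) (ltW d0)).
have -> : (3`!)%:R = 6 :> R by [].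
move=> H; apply: le_trans H.
have : n%:R ^+ 2 * 6 <= n%:R ^+ 2 * (n%:R * del ^+ 3) by rewrite ler_wpM2l // exprn_ge0 // ltW.
have -> : (n%:R * del) ^+ 3 = n%:R ^+ 2 * (n%:R * del ^+ 3) by ring.
move=> h2; rewrite -mulrA ler_wpDl // -[X in X <= _]mulr1 ler_wpM2l ?exprn_ge0 // ?(ltW nR) // ler_pdivlMr // mul1r.
have : 0 <= n%:R ^+ 2 :> R by rewrite exprn_ge0 ?ltW.
lra.
Qed.

Lemma delta_bound (R : realType) (y c1 c2 : R) :
  0 < c1 -> c2 < 1 -> 1 - c2 <= y -> y <= 1 - c1 ->
  (1 - c2) * c1 ^+ 2 / 4 <= y * (1 - Num.sqrt y) ^+ 2.
Proof.
move=> c10 c21 yl yu.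
have y0 : 0 <= y by lra.
set s := Num.sqrt y.
have s0 : 0 <= s by apply: sqrtr_ge0.
have ys : s ^+ 2 = y by rewrite sqr_sqrtr.
have s1 : s <= 1 by nra.
have h1 : c1 / 2 <= 1 - s by nra.
have h2 : c1 ^+ 2 / 4 <= (1 - s) ^+ 2 by nra.
nra.
Qed.

Unset Implicit Arguments.
Theorem lemma14 (R : realType) (dmin dmax : nat) (c1 c2 : R) :
  (2 <= dmin)%N -> (dmin <= dmax)%N ->
  0 < c1 -> c1 <= c2 -> c2 < 1 ->
  exists N : nat, forall n : nat, (N <= n)%N ->
    forall (B : {set 'I_n}) (d : 'I_n -> nat),
      (#|B|)%:R <= c2 * n%:R ->
      (forall v, dmin <= d v <= dmax)%N ->
      forall k : nat, c1 * n%:R <= k%:R -> k%:R <= c2 * n%:R ->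
        prob_rr_size R d B k <= 1 / (n%:R ^+ 2).
Proof.
move=> hdmin hdd c10 c12 c21.
set del := (1 - c2) * c1 ^+ 2 / 4.
have d0 : 0 < del by rewrite /del; apply: divr_gt0 => //; apply: mulr_gt0; rewrite ?subr_gt0 ?exprn_gt0.
exists (maxn dmax.+1 (Num.truncn (6 / del ^+ 3)).+1) => n nN B d _ hd k hk1 hk2.
have ndmax : (dmax < n)%N by apply: leq_trans nN; rewrite leq_maxl.
have n0 : (0 < n)%N by apply: leq_ltn_trans ndmax.
have nR : 0 < n%:R :> R by rewrite ltr0n.
have nbig : 6 <= n%:R * del ^+ 3.
  have h := truncnS_gt (6 / del ^+ 3).
  have h2 : (Num.truncn (6 / del ^+ 3)).+1%:R <= n%:R :> R.
    by rewrite ler_nat; apply: leq_trans nN; rewrite leq_maxr.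
  have h3 := lt_le_trans h h2.
  rewrite ltr_pdivrMr ?exprn_gt0 // in h3; lra.
have kn : (k < n)%N.
  by rewrite -(ltr_nat R); apply: le_lt_trans hk2 _; rewrite gtr_pMl.
have hd' : forall v, (2 <= d v <= n)%N.
  move=> v; case/andP: (hd v) => h1 h2; apply/andP; split.
    exact: leq_trans h1.
  by apply: leq_trans h2 (ltnW ndmax).
apply: le_trans (main_bound R B kn hd') _.
have ey : (n - k)%:R / n%:R = 1 - k%:R / n%:R :> R.
  by rewrite natrB ?(ltnW kn) // mulrBl divff // gt_eqF.
have kl : c1 <= k%:R / n%:R by rewrite ler_pdivlMr.
have ku : k%:R / n%:R <= c2 by rewrite ler_pdivrMr.
apply: le_trans (anal n0 (erefl _) _ _) _.
- rewrite ey; lra.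
- rewrite ey; lra.
apply: (le_trans _ (@exp_tail R n del d0 nbig n0)).
rewrite ler_expR lerN2 ler_wpM2l ?(ltW nR) //.
apply: delta_bound => //; rewrite ey; lra.
Qed.
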